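(* For every integer $k\geq 1$ there exists a finite tree $\tau$ such that $\mathrm{box}(\tau^k)>k$.
   Context: For a tree $\tau$, $\tau^k$ is the graph on $V(\tau)$ in which distinct $u,v$ are adjacent iff their distance in $\tau$ is at most $k$. The boxicity $\mathrm{box}(G)$ is the minimum integer $t$ such that $G$ is the intersection graph of axis-parallel $t$-dimensional boxes (Cartesian products of $t$ closed real intervals), i.e. there is a map $f$ from $V(G)$ to such boxes with $(u,v)\in E(G)\iff f(u)\cap f(v)\neq\emptyset$ for distinct $u,v$. *)

(* Defs.v *)
From mathcomp Require Import all_boot all_order all_algebra.
From mathcomp Require Import reals.
Set Implicit Arguments. Unset Strict Implicit. Unset Printing Implicit Defensive.
Import Order.TTheory GRing.Theory Num.Theory.
Local Open Scope ring_scope.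

Definition is_tree (T : finType) (e : rel T) : Prop :=
  [/\ 0 < #|T|, symmetric e, irreflexive e,
      (forall u v : T, connect e u v) &
      (forall p : seq T, uniq p -> 3 <= size p -> ~~ cycle e p)]%N.

Definition dist_le (T : finType) (e : rel T) (k : nat) (u v : T) : Prop :=
  exists p : seq T, [/\ path e u p, last u p = v & (size p <= k)%N].

Definition graph_pow (T : finType) (e : rel T) (k : nat) (u v : T) : Prop :=
  u <> v /\ dist_le e k u v.

Record box (R : realType) (t : nat) := Box {
  lo : 'I_t -> R; hi : 'I_t -> R; lo_le_hi : forall i, lo i <= hi i }.

Definition in_box (R : realType) t (b : box R t) (x : 'I_t -> R) : Prop :=
  forall i, lo b i <= x i <= hi b i.

Definition boxes_meet (R : realType) t (b1 b2 : box R t) : Prop :=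
  exists x : 'I_t -> R, in_box b1 x /\ in_box b2 x.

Definition box_rep (R : realType) (T : finType) (G : T -> T -> Prop) (t : nat) :
  Prop :=
  exists f : T -> box R t,
    forall u v : T, u <> v -> (G u v <-> boxes_meet (f u) (f v)).

Definition boxicity_gt (R : realType) (T : finType) (G : T -> T -> Prop)
  (k : nat) : Prop :=
  ~ exists t : nat, (t <= k)%N /\ box_rep R G t.

(* Main.v *)
Require Import Defs.
From mathcomp Require Import all_boot all_order all_algebra.
From mathcomp Require Import reals.
From mathcomp Require Import zify.
Set Implicit Arguments. Unset Strict Implicit. Unset Printing Implicit Defensive.
Import Order.TTheory GRing.Theory Num.Theory.

Definition pedge (T : eqType) (root : T) (par : T -> T) : rel T :=
  fun u v => ((v != root) && (u == par v)) || ((u != root) && (v == par u)).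

Lemma pedge_tree (T : finType) (root : T) (par : T -> T) (rank : T -> nat) :
  (forall v, v != root -> rank (par v) < rank v) ->
  is_tree (pedge root par).
Proof.
move=> Hr; split.
- by apply/card_gt0P; exists root.
- by move=> u v; rewrite /pedge orbC.
- move=> u; rewrite /pedge; apply/negP => /orP[] /andP[H1 /eqP H2].
    by have := Hr _ H1; rewrite -H2 ltnn.
  by have := Hr _ H1; rewrite -H2 ltnn.
- have Hroot : forall v, connect (pedge root par) v root.
    move=> v; move Hn: (rank v) => n; elim: n {-2}n (leqnn n) v Hn => [|n IH] m Hm v Hv.
      case: (eqVneq v root) => [->|Hv0]; first exact: connect0.
      by have := Hr _ Hv0; rewrite Hv; move: Hm; rewrite leqn0 => /eqP ->.
    case: (eqVneq v root) => [->|Hv0]; first exact: connect0.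
    apply: (connect_trans (connect1 _)).
      by apply/orP; right; rewrite Hv0 /=.
    apply: (IH (rank (par v))) => //.
    by have := Hr _ Hv0; rewrite Hv => H; rewrite -ltnS (leq_trans H Hm).
  have Hsym : connect_sym (pedge root par).
    by apply: sym_connect_sym => u v; rewrite /pedge orbC.
  move=> u v; apply: connect_trans (Hroot u) _; rewrite Hsym; exact: Hroot.
- move=> p Hu Hs; apply/negP => Hc.
  have Hp0 : head root p \in p.
    by case: p Hs {Hu Hc} => [|a p] //= _; exact: mem_head.
  set x := [arg max_(i > head root p | i \in p) rank i].
  have [Hx Hmax] : x \in p /\ forall y, y \in p -> rank y <= rank x.
    by rewrite /x; case: arg_maxnP => // i Hi H; split => // y /H.
  have := rot_index Hx; set i := index x p; set q := (_ ++ _) => Hrot.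
  have Hc' : cycle (pedge root par) (x :: q) by rewrite -Hrot rot_cycle.
  have Hu' : uniq (x :: q) by rewrite -Hrot rot_uniq.
  have Hs' : 2 <= size q by move: Hs; rewrite -(size_rot i p) Hrot.
  have Hq : forall y, y \in q -> y \in p.
    by move=> y Hy; rewrite -(mem_rot i) Hrot inE Hy orbT.
  case: q Hc' Hu' Hs' Hq {Hrot} => [|y [|a q']] // Hc' Hu' _ Hq.
  move: Hc'; rewrite /cycle rcons_path /= => /andP[/andP[Exy _] Ezx].
  set z := last a q' in Ezx.
  have Hz : z \in a :: q' by exact: mem_last.
  have Hyz : y != z.
    apply/eqP => Eyz; move: Hu' => /= /andP[_ /andP[Hy' _]].
    by rewrite Eyz Hz in Hy'.
  have Hy : y \in p by apply: Hq; rewrite inE eqxx.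
  have Hzp : z \in p by apply: Hq; rewrite inE Hz orbT.
  have E1 : y = par x.
    move: Exy; rewrite /pedge => /orP[] /andP[H1 /eqP H2].
      by have := Hr _ H1; rewrite -H2 ltnNge Hmax.
    exact: H2.
  have E2 : z = par x.
    move: Ezx; rewrite /pedge => /orP[] /andP[H1 /eqP H2].
      exact: H2.
    by have := Hr _ H1; rewrite -H2 ltnNge Hmax.
  by move: Hyz; rewrite E1 E2 eqxx.
Qed.
Lemma dist0 (T : finType) (e : rel T) u : dist_le e 0 u u.
Proof. by exists [::]. Qed.

Lemma dist_edge (T : finType) (e : rel T) u v : e u v -> dist_le e 1 u v.
Proof. by move=> H; exists [:: v]; rewrite /= H. Qed.

Lemma dist_cat (T : finType) (e : rel T) m n u w v :
  dist_le e m u w -> dist_le e n w v -> dist_le e (m + n) u v.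
Proof.
move=> [p [Hp Hl Hs]] [q [Hq Hl' Hs']]; exists (p ++ q); split.
- by rewrite cat_path Hp Hl Hq.
- by rewrite last_cat Hl Hl'.
- by rewrite size_cat leq_add.
Qed.

Lemma dist_mono (T : finType) (e : rel T) m n u v :
  m <= n -> dist_le e m u v -> dist_le e n u v.
Proof. by move=> Hmn [p [Hp Hl Hs]]; exists p; split => //; apply: leq_trans Hmn. Qed.

Lemma dist_sym (T : finType) (e : rel T) n u v :
  symmetric e -> dist_le e n u v -> dist_le e n v u.
Proof.
move=> Hsym [p [Hp Hl Hs]]; exists (rev (belast u p)); split.
- rewrite -Hl rev_path; apply: etrans Hp; apply: eq_path => x y; exact: Hsym.
- rewrite -Hl; case: p {Hp Hl Hs} => [|y p] //=.
  by rewrite rev_cons last_rcons.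
- by rewrite size_rev size_belast.
Qed.

Lemma dist_step (T : finType) (e : rel T) n u w v :
  dist_le e n u w -> e w v -> dist_le e n.+1 u v.
Proof. by move=> H1 H2; rewrite -addn1; apply: dist_cat H1 (dist_edge H2). Qed.

Lemma dist_lip (T : finType) (e : rel T) (g : T -> int) n u v :
  (forall x y, e x y -> (g x - g y <= 1)%R) -> dist_le e n u v -> (g u - g v <= n%:Z)%R.
Proof.
move=> Hg [p [Hp Hl Hs]]; rewrite -Hl {Hl}.
suff: (g u - g (last u p) <= (size p)%:Z)%R.
  move=> H; apply: (Order.POrderTheory.le_trans H); by rewrite lez_nat.
elim: p u Hp {Hs} => [|y p IH] u /=; first by rewrite subrr.
move=> /andP[Huy Hp]; have := IH _ Hp; have := Hg _ _ Huy.
rewrite -[(size p).+1]addn1. lia.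
Qed.

Definition spar (M k : nat) (v : option ('I_M * 'I_k.+1)) : option ('I_M * 'I_k.+1) :=
  if v is Some (i, a) then (if val a is a'.+1 then Some (i, inord a') else None) else None.
Definition srank (M k : nat) (v : option ('I_M * 'I_k.+1)) : nat :=
  if v is Some (_, a) then (val a).+1 else 0.
Definition sedge (M k : nat) : rel (option ('I_M * 'I_k.+1)) := pedge None (@spar M k).
Arguments sedge : clear implicits.

Lemma spider_tree M k : is_tree (sedge M k).
Proof.
apply: (pedge_tree (rank := @srank M k)) => [[[i a]|]] // _.
rewrite /spar /srank; case: a => [[|a] Ha] //=.
by rewrite /= inordK ?(ltnW Ha).
Qed.

Definition vx (M k : nat) (i : 'I_M) (a : nat) : option ('I_M * 'I_k.+1) := Some (i, inord a).

Definition gi (M k : nat) (i : 'I_M) (v : option ('I_M * 'I_k.+1)) : int :=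
  if v is Some (j, a) then (if j == i then ((val a).+1)%:Z else - ((val a).+1)%:Z)%R else 0%R.

Lemma gi_lip M k i x y : sedge M k x y -> (gi i x - gi i y <= 1)%R.
Proof.
rewrite /sedge /pedge => /orP[] /andP[Hne /eqP ->].
- case: y Hne => [[j [[|a] Ha]]|] //= _.
  + by case: (j == i); lia.
  + rewrite inordK //; by case: (j == i); lia.
- case: x Hne => [[j [[|a] Ha]]|] //= _.
  + by case: (j == i); lia.
  + rewrite inordK //; by case: (j == i); lia.
Qed.

Lemma sedge_sym M k : symmetric (sedge M k).
Proof. by move=> u v; rewrite /sedge /pedge orbC. Qed.

Lemma up_walk M k (i : 'I_M) a : a < k.+1 -> dist_le (sedge M k) a.+1 None (vx k i a).
Proof.
elim: a => [|a IH] Ha.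
  apply: dist_edge; rewrite /sedge /pedge /vx /spar /= inordK //.
apply: (dist_step (IH (ltnW Ha))).
by rewrite /sedge /pedge /vx /spar /= inordK // eqxx.
Qed.

Lemma leg_walk M k (i : 'I_M) a b : a <= b -> b < k.+1 ->
  dist_le (sedge M k) (b - a) (vx k i a) (vx k i b).
Proof.
elim: b => [|b IH] Hab Hb.
  by move: Hab; rewrite leqn0 => /eqP ->; exact: dist0.
case: (ltngtP a b.+1) Hab => // [Hlt|->] _; last by rewrite subnn; exact: dist0.
rewrite subSn //; apply: (dist_step (IH Hlt (ltnW Hb))).
by rewrite /sedge /pedge /vx /spar /= inordK // eqxx.
Qed.

Lemma vx_eq M k (i j : 'I_M) a b : a < k.+1 -> b < k.+1 -> vx k i a = vx k j b -> i = j /\ a = b.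
Proof.
move=> Ha Hb [-> /(congr1 (@nat_of_ord _))]; by rewrite !inordK.
Qed.

Lemma adj_c M k (i : 'I_M) a : a < k -> graph_pow (sedge M k) k None (vx k i a).
Proof. by move=> Ha; split => //; apply: dist_mono (up_walk i (ltnW Ha)). Qed.

Lemma adj_f M k (i : 'I_M) a : a < k -> graph_pow (sedge M k) k (vx k i a) (vx k i k).
Proof.
move=> Ha; split.
  by move/(vx_eq (ltnW Ha) (ltnSn k)) => [_ Hak]; move: Ha; rewrite Hak ltnn.
by apply: dist_mono (leg_walk i (ltnW Ha) (ltnSn k)); apply: leq_subr.
Qed.

Lemma adj_leg M k (i : 'I_M) a b : a < b -> b < k -> graph_pow (sedge M k) k (vx k i a) (vx k i b).
Proof.
move=> Hab Hb; have Ha : a < k by apply: ltn_trans Hb.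
split.
  by move/(vx_eq (ltnW Ha) (ltnW Hb)) => [_ Hab']; move: Hab; rewrite Hab' ltnn.
apply: dist_mono (leg_walk i (ltnW Hab) (ltnW Hb)).
by apply: leq_trans (leq_subr _ _) (ltnW Hb).
Qed.

Lemma adj_cross M k (i l : 'I_M) a b : i != l -> (a + b).+2 <= k ->
  graph_pow (sedge M k) k (vx k i a) (vx k l b).
Proof.
move=> Hil Hab; split.
  by rewrite /vx => -[] /eqP; rewrite (negbTE Hil).
have Ha : a < k.+1 by lia.
have Hb : b < k.+1 by lia.
have H1 := dist_sym (@sedge_sym M k) (up_walk i Ha).
apply: dist_mono (dist_cat H1 (up_walk l Hb)); lia.
Qed.

Lemma nonadj_cf M k (i : 'I_M) : ~ dist_le (sedge M k) k None (vx k i k).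
Proof.
move=> H; have := dist_lip (@gi_lip M k i) (dist_sym (@sedge_sym M k) H).
rewrite /gi /vx /= eqxx inordK //; lia.
Qed.

Lemma nonadj_cross M k (i j : 'I_M) a b : i != j -> a < k.+1 -> b < k.+1 -> k <= (a + b).+1 ->
  ~ dist_le (sedge M k) k (vx k i a) (vx k j b).
Proof.
move=> Hij Ha Hb Hab H; have := dist_lip (@gi_lip M k i) H.
have Hji : (j == i) = false by rewrite eq_sym (negbTE Hij).
rewrite /gi /vx /= eqxx Hji !inordK //; lia.
Qed.

Lemma mono2 (C : finType) n (col : 'I_n -> 'I_n -> C) : 2 ^ #|C| < n ->
  exists i j l : 'I_n, [/\ i < j, j < l & col i j = col j l].
Proof.
move=> Hn.
case: (boolP [exists i : 'I_n, exists j : 'I_n, exists l : 'I_n, [&& i < j, j < l & col i j == col j l]]).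
  move/existsP => [i /existsP [j /existsP [l /and3P [H1 H2 /eqP H3]]]].
  by exists i, j, l.
move=> Hno; exfalso.
have Hno' : forall i j l : 'I_n, i < j -> j < l -> col i j <> col j l.
  move=> i j l H1 H2 H3; move/negP: Hno; apply; apply/existsP; exists i.
  apply/existsP; exists j; apply/existsP; exists l; by rewrite H1 H2 H3 eqxx.
pose S (j : 'I_n) := [set c | [exists h : 'I_n, (h < j) && (col h j == c)]].
have HS : forall i j : 'I_n, i < j -> S i <> S j.
  move=> i j Hij HSij.
  have : col i j \in S j by rewrite inE; apply/existsP; exists i; rewrite Hij eqxx.
  rewrite -HSij inE => /existsP [h /andP [Hh /eqP Hc]].
  exact: (Hno' h i j Hh Hij Hc).
have Hinj : injective S.
  move=> i j HSij; case: (ltngtP i j) => [Hij|Hji|/val_inj //].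
    by case: (HS _ _ Hij HSij).
  by case: (HS _ _ Hji (esym HSij)).
have := @leq_card _ _ S Hinj; rewrite card_ord -cardsT -powersetT card_powerset cardsT.
by rewrite leqNgt Hn.
Qed.

Lemma meet_of (R : realType) (T : finType) (G : T -> T -> Prop) t (f : T -> box R t) u v :
  (forall u v, u <> v -> (G u v <-> boxes_meet (f u) (f v))) -> u <> v -> G u v ->
  forall d, (lo (f u) d <= hi (f v) d)%R /\ (lo (f v) d <= hi (f u) d)%R.
Proof.
move=> Hf Huv Hg d; have [x [Hu Hv]] := (Hf u v Huv).1 Hg.
have /andP[H1 H2] := Hu d; have /andP[H3 H4] := Hv d.
by split; [apply: le_trans H1 H4 | apply: le_trans H3 H2].
Qed.

Lemma sep_of (R : realType) (T : finType) (G : T -> T -> Prop) t (f : T -> box R t) u v :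
  (forall u v, u <> v -> (G u v <-> boxes_meet (f u) (f v))) -> u <> v -> ~ G u v ->
  exists d, (hi (f u) d < lo (f v) d)%R \/ (hi (f v) d < lo (f u) d)%R.
Proof.
move=> Hf Huv Hg.
case: (boolP [exists d, (hi (f u) d < lo (f v) d)%R || (hi (f v) d < lo (f u) d)%R]).
  by move/existsP => [d /orP H]; exists d.
move=> Hno; exfalso; apply: Hg; apply/(Hf u v Huv).
exists (fun d => Num.max (lo (f u) d) (lo (f v) d)).
have H : forall d, (lo (f v) d <= hi (f u) d)%R /\ (lo (f u) d <= hi (f v) d)%R.
  move=> d; move/negP: Hno => Hno.
  split; rewrite leNgt; apply/negP => H; apply: Hno; apply/existsP; exists d;
    by rewrite H ?orbT.
split => d; have [H1 H2] := H d.
  by rewrite le_max lexx /= ge_max H1 lo_le_hi.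
by rewrite le_max lexx orbT /= ge_max H2 lo_le_hi.
Qed.

Lemma two2 (R : realType) (x1 x2 x3 x4 : R) :
  (x1 < x2)%R -> (x3 < x4)%R -> (x4 <= x1)%R -> (x2 <= x3)%R -> False.
Proof.
move=> H1 H2 H3 H4.
have := lt_trans (lt_le_trans H1 H4) (lt_le_trans H2 H3); by rewrite ltxx.
Qed.

Definition Col (k : nat) : finType := ({ffun 'I_k -> ({set 'I_k} * {set 'I_k})} * option ('I_k * bool))%type.
Definition Msz k := (2 ^ #|Col k|).+1.

Theorem theorem2 (R : realType) (k : nat) : (1 <= k)%N ->
  exists (T : finType) (e : rel T),
    is_tree e /\ boxicity_gt R (graph_pow e k) k.
Proof.
move=> Hk; exists (option ('I_(Msz k) * 'I_k.+1))%type; exists (sedge (Msz k) k).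
split; first exact: spider_tree.
move=> [t [Htk [f Hf]]].
set M := Msz k in f Hf *.
pose G := graph_pow (sedge M k) k.
pose L v d := lo (f v) d.
pose Hh v d := hi (f v) d.
pose w (i : 'I_M) (p : 'I_k) := vx k i p.
pose fv (i : 'I_M) := vx k i k.
have hsame : forall i (p q : 'I_k) d, (L (w i p) d <= Hh (w i q) d)%R.
  move=> i p q d; case: (ltngtP p q) => [Hpq|Hqp|Hpq].
  - have Hg := adj_leg i Hpq (ltn_ord q).
    exact: (meet_of Hf Hg.1 Hg d).1.
  - have Hg := adj_leg i Hqp (ltn_ord p).
    exact: (meet_of Hf Hg.1 Hg d).2.
  - by rewrite (val_inj Hpq) /L /Hh lo_le_hi.
have hcross : forall (i l : 'I_M) (p q : 'I_k) d, i != l -> (p + q).+2 <= k ->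
    (L (w i p) d <= Hh (w l q) d)%R /\ (L (w l q) d <= Hh (w i p) d)%R.
  move=> i l p q d Hil Hpq; have Hg := adj_cross Hil Hpq.
  exact: (meet_of Hf Hg.1 Hg d).
have hc : forall i (p : 'I_k) d, (L (w i p) d <= Hh None d)%R /\ (L None d <= Hh (w i p) d)%R.
  move=> i p d; have Hg := adj_c i (ltn_ord p).
  by have [H1 H2] := meet_of Hf Hg.1 Hg d; split.
have hf : forall i (p : 'I_k) d, (L (w i p) d <= Hh (fv i) d)%R /\ (L (fv i) d <= Hh (w i p) d)%R.
  move=> i p d; have Hg := adj_f i (ltn_ord p).
  exact: (meet_of Hf Hg.1 Hg d).
have hsep_cf : forall i, exists d, (Hh None d < L (fv i) d)%R \/ (Hh (fv i) d < L None d)%R.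
  move=> i; apply: (sep_of Hf) => //; move=> [_ Hd]; exact: nonadj_cf Hd.
have hsep_cross : forall (i j : 'I_M) (p : 'I_k), i != j -> exists d,
    (Hh (w i p) d < L (w j (rev_ord p)) d)%R \/ (Hh (w j (rev_ord p)) d < L (w i p) d)%R.
  move=> i j p Hij; apply: (sep_of Hf).
    by move/(vx_eq (ltnW (ltn_ord p)) (ltnW (ltn_ord (rev_ord p)))) => [Hij' _]; move: Hij; rewrite Hij' eqxx.
  move=> [_ Hd]; apply: (nonadj_cross Hij _ _ _ Hd).
  - exact: ltnW (ltn_ord p).
  - exact: ltnW (ltn_ord (rev_ord p)).
  - rewrite /=; have := ltn_ord p; lia.
pose cond (i : 'I_M) (ds : 'I_t * bool) :=
  if ds.2 then (Hh None ds.1 < L (fv i) ds.1)%R else (Hh (fv i) ds.1 < L None ds.1)%R.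
pose sel (i : 'I_M) := [pick ds | cond i ds].
have Hsel : forall i, exists ds, sel i = Some ds /\ cond i ds.
  move=> i; rewrite /sel; case: pickP => [ds Hds|Hnone]; first by exists ds.
  have [d Hd] := hsep_cf i; exfalso.
  case: Hd => Hd.
    by have := Hnone (d, true); rewrite /cond /= Hd.
  by have := Hnone (d, false); rewrite /cond /= Hd.
pose emb (d : 'I_t) : 'I_k := widen_ord Htk d.
pose Fs (d : 'I_t) (i j : 'I_M) := [set p : 'I_k | (Hh (w i p) d < L (w j (rev_ord p)) d)%R].
pose Bs (d : 'I_t) (i j : 'I_M) := [set p : 'I_k | (Hh (w j (rev_ord p)) d < L (w i p) d)%R].
pose col (i j : 'I_M) : Col k :=
  ([ffun d : 'I_k => if (insub (val d) : option 'I_t) is Some d' then (Fs d' i j, Bs d' i j)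
                      else (set0, set0)], omap (fun ds => (emb ds.1, ds.2)) (sel i)).
have [i [j [l [Hij Hjl Hcol]]]] := mono2 col (ltnSn _).
have Hsets : forall d : 'I_t, Fs d i j = Fs d j l /\ Bs d i j = Bs d j l.
  move=> d; have := congr1 (fun c : Col k => c.1 (emb d)) Hcol.
  rewrite /col /= !ffunE /= valK.
  by move=> [-> ->].
have [[d0 s0] [Hseli Hci]] := Hsel i.
have Hcj : cond j (d0, s0).
  have [[d1 s1] [Hselj Hcj]] := Hsel j.
  have := congr1 (fun c : Col k => c.2) Hcol; rewrite /col /= Hseli Hselj /=.
  by move=> [/val_inj -> ->].
have Hil : i != l by rewrite -val_eqE /= neq_ltn (ltn_trans Hij Hjl).
have Hij' : i != j by rewrite -val_eqE /= neq_ltn Hij.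
have Hjl' : j != l by rewrite -val_eqE /= neq_ltn Hjl.
have nosep : forall x y (p q : 'I_k), cond x (d0, s0) -> cond y (d0, s0) ->
    (L (w y q) d0 <= Hh (w x p) d0)%R.
  move=> x y p q; rewrite /cond /=; case Hs : s0 => Hx Hy.
    apply: le_trans (hc y q d0).1 _; apply: ltW; apply: lt_le_trans Hx _.
    exact: (hf x p d0).2.
  apply: le_trans (hf y q d0).1 _; apply: ltW; apply: lt_le_trans Hy _.
  exact: (hc x p d0).2.
pose D (p : 'I_k) := odflt d0 [pick d | (Hh (w i p) d < L (w j (rev_ord p)) d)%R
                                      || (Hh (w j (rev_ord p)) d < L (w i p) d)%R].
have HD : forall p, (p \in Fs (D p) i j) || (p \in Bs (D p) i j).
  move=> p; rewrite /D; case: pickP => [d Hd|Hnone]; first by rewrite !inE.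
  have [d Hd] := hsep_cross i j p Hij'; exfalso.
  by have := Hnone d; case: Hd => ->; rewrite ?orbT.
have HDd0 : forall p, D p != d0.
  move=> p; apply/eqP => Hp; have := HD p; rewrite Hp !inE.
  rewrite !ltNge (nosep i j) // (nosep j i) //.
have bothdir : forall d (p p' : 'I_k), p \in Fs d i j -> p' \in Bs d i j -> False.
  move=> d p p'; rewrite !inE => H1 H2.
  exact: (two2 H1 H2 (hsame i p' p d) (hsame j (rev_ord p) (rev_ord p') d)).
have chainF : forall d (p p' : 'I_k), p \in Fs d i j -> p' \in Fs d j l -> p' <= p.
  move=> d p p'; rewrite !inE => H1 H2; rewrite leqNgt; apply/negP => Hpp.
  have Hc : ((rev_ord p') + p).+2 <= k by rewrite /=; have := ltn_ord p'; lia.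
  have Hl : l != i by rewrite eq_sym.
  exact: (two2 H1 H2 (hcross l i (rev_ord p') p d Hl Hc).1 (hsame j (rev_ord p) p' d)).
have chainB : forall d (p p' : 'I_k), p \in Bs d i j -> p' \in Bs d j l -> p' <= p.
  move=> d p p'; rewrite !inE => H1 H2; rewrite leqNgt; apply/negP => Hpp.
  have Hc : (p + (rev_ord p')).+2 <= k by rewrite /=; have := ltn_ord p'; lia.
  exact: (two2 H2 H1 (hcross i l p (rev_ord p') d Hil Hc).1 (hsame j p' (rev_ord p) d)).
have HDinj : injective D.
  move=> p p' Hpp; apply: val_inj; apply/eqP; rewrite eqn_leq.
  have := HD p; have := HD p'; rewrite -Hpp.
  have [HF HB] := Hsets (D p).
  case/orP => H1; case/orP => H2.
  - have H1' := H1; have H2' := H2; rewrite HF in H1' H2'.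
    by rewrite (chainF _ _ _ H2 H1') (chainF _ _ _ H1 H2').
  - by case: (bothdir _ _ _ H1 H2).
  - by case: (bothdir _ _ _ H2 H1).
  - have H1' := H1; have H2' := H2; rewrite HB in H1' H2'.
    by rewrite (chainB _ _ _ H2 H1') (chainB _ _ _ H1 H2').
pose D' (o : option 'I_k) := if o is Some p then D p else d0.
have HD'inj : injective D'.
  move=> [p|] [p'|] //= H.
  - by rewrite (HDinj _ _ H).
  - by move: (HDd0 p); rewrite H eqxx.
  - by move: (HDd0 p'); rewrite H eqxx.
have := @leq_card _ _ D' HD'inj; rewrite card_option !card_ord.
by rewrite leqNgt ltnS Htk.
Qed.
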